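(* Let $\mathcal{M}=\langle S,\to,L\rangle$ be a labeled transition system and let $B\subseteq S\times S$ be a skipping simulation (SKS) on $\mathcal{M}$. Then $B$ is a reduced well-founded skipping relation (RWFSK) on $\mathcal{M}$.
   Context: A labeled transition system is $\mathcal{M}=\langle S,\to,L\rangle$ where $S$ is a non-empty (possibly infinite, of arbitrary cardinality) set of states, $\to\subseteq S\times S$ is left-total (every state has a successor), and $L$ is a function with domain $S$. A fullpath is an infinite sequence $\sigma$ of states with $\sigma(i)\to\sigma(i+1)$ for all $i\in\omega$; ''$\sigma$ is a fullpath starting at $s$'' means additionally $\sigma(0)=s$. $w\to^{+}v$ means there is a finite path $w=v_0\to\cdots\to v_k=v$ with $k\ge1$. Matching: let $\mathit{INC}$ be the set of strictly increasing infinite sequences of natural numbers starting at $0$. For a fullpath $\sigma$ and $\pi\in\mathit{INC}$, the $i$-th segment of $\sigma$ w.r.t. $\pi$ is the finite sequence $\sigma(\pi(i)),\dots,\sigma(\pi(i+1)-1)$. For a relation $B$, fullpaths $\sigma,\delta$ and $\pi,\xi\in\mathit{INC}$, $\mathit{corr}(B,\sigma,\pi,\delta,\xi)$ holds iff for every $i\in\omega$ and every state $s$ in the $i$-th segment of $\sigma$ w.r.t. $\pi$, $sB\delta(\xi(i))$. $\mathit{match}(B,\sigma,\delta)$ holds iff there exist $\pi,\xi\in\mathit{INC}$ with $\mathit{corr}(B,\sigma,\pi,\delta,\xi)$. $B\subseteq S\times S$ is a skipping simulation (SKS) on $\mathcal{M}$ iff for all $s,w$ with $sBw$: (SKS1)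 $L(s)=L(w)$, and (SKS2) for every fullpath $\sigma$ starting at $s$ there is a fullpath $\delta$ starting at $w$ with $\mathit{match}(B,\sigma,\delta)$. $B$ is an RWFSK on $\mathcal{M}$ iff (RWFSK1) for all $s,w$ with $sBw$, $L(s)=L(w)$; and (RWFSK2) there exist a well-founded set $\langle W,\prec\rangle$ and a function $\mathit{rankt}:S\times S\to W$ such that for all $s,u,w\in S$ with $s\to u$ and $sBw$, either (a) $uBw$ and $\mathit{rankt}(u,w)\prec\mathit{rankt}(s,w)$, or (b) there is $v$ with $w\to^{+}v$ and $uBv$. *)

(* Defs.v *)
From Stdlib Require Import Arith Relations Wellfounded.

Set Implicit Arguments.

Record LTS := mkLTS {
  St : Type;
  Lab : Type;
  trans : St -> St -> Prop;
  lab : St -> Lab;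
  St_nonempty : inhabited St;
  trans_left_total : forall s : St, exists u : St, trans s u
}.

Section LTSDefs.
Variable M : LTS.

Definition fullpath (sigma : nat -> St M) : Prop :=
  forall i : nat, trans M (sigma i) (sigma (S i)).

Definition fullpath_from (s : St M) (sigma : nat -> St M) : Prop :=
  fullpath sigma /\ sigma 0 = s.

Definition trans_plus (w v : St M) : Prop := clos_trans _ (trans M) w v.

Definition INC (pi : nat -> nat) : Prop :=
  pi 0 = 0 /\ forall i : nat, pi i < pi (S i).

Definition corr (B : St M -> St M -> Prop) (sigma : nat -> St M) (pi : nat -> nat)
    (delta : nat -> St M) (xi : nat -> nat) : Prop :=
  forall i k : nat, pi i <= k < pi (S i) -> B (sigma k) (delta (xi i)).

Definition match_ (B : St M -> St M -> Prop) (sigma delta : nat -> St M) : Prop :=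
  exists pi xi : nat -> nat, INC pi /\ INC xi /\ corr B sigma pi delta xi.

Definition SKS (B : St M -> St M -> Prop) : Prop :=
  forall s w : St M, B s w ->
    lab M s = lab M w /\
    (forall sigma, fullpath_from s sigma ->
       exists delta, fullpath_from w delta /\ match_ B sigma delta).

Definition RWFSK (B : St M -> St M -> Prop) : Prop :=
  (forall s w : St M, B s w -> lab M s = lab M w) /\
  exists (W : Type) (prec : W -> W -> Prop) (rankt : St M -> St M -> W),
    well_founded prec /\
    forall s u w : St M, trans M s u -> B s w ->
      (B u w /\ prec (rankt u w) (rankt s w)) \/
      (exists v : St M, trans_plus w v /\ B u v).

End LTSDefs.
Arguments SKS : clear implicits.
Arguments RWFSK : clear implicits.

(* Main.v *)
Require Import Defs.
From Stdlib Require Import Arith Relations Wellfounded.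
From Stdlib Require Import Classical ClassicalEpsilon Lia.
Set Implicit Arguments.

Section Pf.
Variable M : LTS.
Variable B : St M -> St M -> Prop.
Hypothesis HB : SKS M B.

Definition inh : inhabited (St M) := St_nonempty M.

Lemma path_plus (d : nat -> St M) : @fullpath M d ->
  forall n, @trans_plus M (d 0) (d (S n)).
Proof.
  intros Hd n; induction n.
  - apply t_step, Hd.
  - eapply t_trans; [exact IHn| apply t_step, Hd].
Qed.

Definition Rw (w u s : St M) : Prop :=
  trans M s u /\ B s w /\ B u w /\ ~ (exists v, @trans_plus M w v /\ B u v).

Lemma notacc_step (w y : St M) : ~ Acc (Rw w) y ->
  exists z, Rw w z y /\ ~ Acc (Rw w) z.
Proof.
  intros H. apply NNPP; intro H2. apply H. constructor. intros z Hz.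
  apply NNPP; intro H3. apply H2. eauto.
Qed.

Lemma Rw_wf (w : St M) : forall x, Acc (Rw w) x.
Proof.
  intro x. apply NNPP; intro Hx.
  set (g := fun y => epsilon inh (fun z => Rw w z y /\ ~ Acc (Rw w) z)).
  assert (Hg : forall y, ~ Acc (Rw w) y -> Rw w (g y) y /\ ~ Acc (Rw w) (g y)).
  { intros y Hy. unfold g. apply epsilon_spec. now apply notacc_step. }
  set (c := fix c (n : nat) := match n with 0 => x | S m => g (c m) end).
  assert (Hc : forall n, ~ Acc (Rw w) (c n)).
  { induction n; simpl; [exact Hx| apply Hg; exact IHn]. }
  assert (Hr : forall n, Rw w (c (S n)) (c n)).
  { intro n. simpl. apply Hg, Hc. }
  assert (HB0 : B x w) by (destruct (Hr 0) as [_ [h _]]; exact h).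
  destruct (@HB x w HB0) as [_ Hp].
  destruct (Hp c) as [d [[Hd Hd0] [pi [xi [[p0 pS] [[x0 xS] Hcorr]]]]]].
  { split; [intro i; apply (Hr i) | reflexivity]. }
  assert (Hk : 1 <= pi 1) by (specialize (pS 0); lia).
  specialize (Hcorr 1 (pi 1)).
  assert (HBk : B (c (pi 1)) (d (xi 1))) by (apply Hcorr; specialize (pS 1); lia).
  assert (Hx1 : xi 1 = S (xi 1 - 1)) by (specialize (xS 0); lia).
  destruct (pi 1) as [|k] eqn:E; [lia|].
  destruct (Hr k) as [_ [_ [_ Hno]]]. apply Hno.
  exists (d (xi 1)). split; [|exact HBk].
  rewrite Hx1, <- Hd0. apply path_plus, Hd.
Qed.

End Pf.

Theorem theorem3 (M : LTS) (B : St M -> St M -> Prop) :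
  SKS M B -> RWFSK M B.
Proof.
  intros HB. split.
  { intros s w H. exact (proj1 (HB s w H)). }
  exists (St M * St M)%type.
  exists (fun p q => snd p = snd q /\ @Rw M B (snd q) (fst p) (fst q)).
  exists (fun s w => (s, w)).
  split.
  - intros [s w].
    assert (H : forall s', Acc (@Rw M B w) s' ->
      Acc (fun p q => snd p = snd q /\ @Rw M B (snd q) (fst p) (fst q)) (s', w)).
    { intros s' Ha. induction Ha as [s' _ IH]. constructor.
      intros [u w'] [E Hr]. simpl in *. subst w'. apply IH, Hr. }
    apply H; apply (Rw_wf HB).
  - intros s u w Hsu Hsw.
    destruct (classic (exists v, @trans_plus M w v /\ B u v)) as [Hv|Hv];
      [right; exact Hv| left].
    set (nx := fun y => epsilon (inh M) (fun z => trans M y z)).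
    assert (Hnx : forall y, trans M y (nx y)).
    { intro y. apply epsilon_spec, trans_left_total. }
    set (c := fix c (n : nat) := match n with 0 => u | S m => nx (c m) end).
    set (sg := fun n => match n with 0 => s | S m => c m end).
    assert (Hsg : @fullpath M sg).
    { intros [|n]; simpl; [exact Hsu| apply Hnx]. }
    destruct (HB _ _ Hsw) as [_ Hp].
    destruct (Hp sg) as [d [[Hd Hd0] [pi [xi [[p0 pS] [[x0 xS] Hcorr]]]]]].
    { split; [exact Hsg|reflexivity]. }
    assert (HBu : B u w).
    { destruct (Nat.eq_dec (pi 1) 1) as [E|E].
      - exfalso. apply Hv. exists (d (xi 1)). split.
        + assert (Hx1 : xi 1 = S (xi 1 - 1)) by (specialize (xS 0); lia).
          rewrite Hx1, <- Hd0. apply path_plus, Hd.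
        + apply (Hcorr 1 1). specialize (pS 1); lia.
      - rewrite <- Hd0, <- x0. apply (Hcorr 0 1). specialize (pS 0); lia. }
    split; [exact HBu|]. simpl. split; [reflexivity|].
    repeat split; auto.
Qed.
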